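(* Consider the FlexPD-F iterates described in the context with $\alpha,\beta>0$, integer $T\ge1$, and $U=I-\alpha B$. If $\alpha<1/\rho(B)$, then for any $d,e,g>1$ and every $k\ge0$, \[\|\lambda^{k+1}-\lambda^*\|^2\le \frac{d}{\alpha^2 s(AA')}\Big(\frac{e}{e-1}\rho(U^2)+e\alpha^2L^2\Big)\|x^{k+1,T-1}-x^{k+1,T}\|^2+\frac{d}{(d-1)\alpha^2 s(AA')}\Big(\frac{g}{g-1}\alpha^2\rho\big((\beta A'A-B)^2\big)+g\alpha^2L^2\Big)\|x^{k+1,T}-x^*\|^2.\]
   Context: Setting: $n$ agents are connected by a connected undirected graph with edge set $\mathcal E$, $\epsilon=|\mathcal E|$. For $x\in\mathbb R^n$ let $f(x)=\sum_{i=1}^n f_i(x_i)$, where each $f_i:\mathbb R\to\mathbb R$ is twice differentiable with $m\le f_i''\le L$ for constants $0<m\le L$; $\nabla f(x)=(f_1'(x_1),\dots,f_n'(x_n))'$. $A\in\mathbb R^{\epsilon\times n}$ is the edge–node incidence matrix (null space spanned by the all-ones vector). $B\in\mathbb R^{n\times n}$ is symmetric positive semidefinite with the same null space as $A$, off-diagonal entries nonzero only on edges. $x^*$ is the unique minimizer of $f$ subject to $Ax=0$ and $\lambda^*$ a Lagrange multiplier with $\nabla f(x^* )+A'\lambda^*=0$, $Ax^*=0$, $Bx^*=0$, chosen in the column space of $A$ (orthogonal to the null space of $A'$). FlexPD-F: given $\alpha,\beta>0$, $T\ge1$, $x^0$ arbitrary, $\lambda^0=0$; for $k\ge0$: $x^{k+1,0}=x^k$,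 $x^{k+1,t}=(I-\alpha B)x^{k+1,t-1}-\alpha\nabla f(x^{k+1,t-1})-\alpha A'\lambda^k$ for $t=1,\dots,T$, $x^{k+1}=x^{k+1,T}$, $\lambda^{k+1}=\lambda^k+\beta Ax^{k+1}$. Notation: $\rho(S)$ largest eigenvalue of a symmetric matrix $S$; $s(AA')$ smallest nonzero eigenvalue of $AA'$; $\|\cdot\|$ Euclidean norm. *)

(* Defs.v *)
From HB Require Import structures.
From mathcomp Require Import all_boot all_order all_algebra.
From mathcomp Require Import all_classical all_reals all_analysis.
Set Implicit Arguments. Unset Strict Implicit. Unset Printing Implicit Defensive.
Import Order.TTheory GRing.Theory Num.Theory.
Local Open Scope ring_scope.

Section FlexPD.
Variable R : realType.

Definition adj (n eps : nat) (E : 'I_eps -> 'I_n * 'I_n) : rel 'I_n :=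
  fun i j => [exists k, (E k == (i, j)) || (E k == (j, i))].

Definition simple_graph (n eps : nat) (E : 'I_eps -> 'I_n * 'I_n) : Prop :=
  (forall k, (E k).1 != (E k).2) /\
  (forall k k', (E k' = E k \/ E k' = ((E k).2, (E k).1)) -> k = k').

Definition connected_graph (n eps : nat) (E : 'I_eps -> 'I_n * 'I_n) : Prop :=
  forall i j, connect (adj E) i j.

Definition incidence (n eps : nat) (E : 'I_eps -> 'I_n * 'I_n) : 'M[R]_(eps, n) :=
  \matrix_(k, l) ((l == (E k).1)%:R - (l == (E k).2)%:R).

Definition sqnorm (p : nat) (v : 'cV[R]_p) : R := \sum_i (v i 0) ^+ 2.

Definition rho (p : nat) (S : 'M[R]_p) : R := sup [set a : R | eigenvalue S a].

Definition smin_nz (p : nat) (S : 'M[R]_p) : R :=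
  inf [set a : R | eigenvalue S a /\ a != 0].

Definition grad (n : nat) (f : 'I_n -> R -> R) (x : 'cV[R]_n) : 'cV[R]_n :=
  \col_i derive1 (f i) (x i 0).

Definition pstep (n eps : nat) (alpha : R) (A : 'M[R]_(eps, n)) (B : 'M[R]_n)
  (f : 'I_n -> R -> R) (lam : 'cV[R]_eps) (y : 'cV[R]_n) : 'cV[R]_n :=
  (1%:M - alpha *: B) *m y - alpha *: grad f y - alpha *: (A^T *m lam).

(* inner iterate x^{k+1,t} given x^{k+1,0} = y and lambda^k = lam *)
Definition inner (n eps : nat) (alpha : R) (A : 'M[R]_(eps, n)) (B : 'M[R]_n)
  (f : 'I_n -> R -> R) (lam : 'cV[R]_eps) (y : 'cV[R]_n) (t : nat) : 'cV[R]_n :=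
  iter t (pstep alpha A B f lam) y.

Fixpoint flexpd (n eps : nat) (alpha beta : R) (T : nat) (A : 'M[R]_(eps, n))
  (B : 'M[R]_n) (f : 'I_n -> R -> R) (x0 : 'cV[R]_n) (k : nat)
  : 'cV[R]_n * 'cV[R]_eps :=
  match k with
  | 0 => (x0, 0)
  | k'.+1 =>
      let p := flexpd alpha beta T A B f x0 k' in
      let xn := inner alpha A B f p.2 p.1 T in
      (xn, p.2 + beta *: (A *m xn))
  end.

End FlexPD.

(* Main.v *)
Require Import Defs.
From HB Require Import structures.
From mathcomp Require Import all_boot all_order all_algebra.
From mathcomp Require Import all_classical all_reals all_analysis.
From mathcomp Require Import complex spectral sesquilinear ring lra.
Import Order.TTheory GRing.Theory Num.Theory.
Local Open Scope ring_scope.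
Set Implicit Arguments. Unset Strict Implicit. Unset Printing Implicit Defensive.

Module SpecAux.
Import Num.Def.
Section T.
Variable R : rcfType.
Local Notation C := R[i].
Local Notation toC := (real_complex R).

Lemma conj_toC (x : R) : (toC x)^* = toC x.
Proof. by apply: conj_Creal; rewrite complex_real. Qed.

Lemma conj_mx_toC p q (X : 'M[R]_(p,q)) : map_mx conjC (map_mx toC X) = map_mx toC X.
Proof. by apply/matrixP => i j; rewrite !mxE conj_toC. Qed.

Lemma quad_diag n (P : 'M[C]_n) (D : 'rV[C]_n) (v : 'cV[R]_n) :
  let w := P *m map_mx toC v in
  (((map_mx toC v)^T *m (map_mx conjC P^T *m diag_mx D *m P)) *m map_mx toC v) 0 0
  = \sum_i D 0 i * (w i 0 * (w i 0)^*).
Proof.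
move=> w.
have -> : (map_mx toC v)^T *m (map_mx conjC P^T *m diag_mx D *m P) *m map_mx toC v
   = map_mx conjC w^T *m diag_mx D *m w.
  rewrite /w trmx_mul map_mxM map_trmx conj_mx_toC !mulmxA //.
rewrite mxE; apply: eq_bigr => j _.
rewrite mul_mx_diag !mxE; ring.
Qed.

Lemma spec_data p q (X : 'M[R]_(p,q)) :
  exists (dd : 'I_p -> R) (c : 'cV[R]_p -> 'I_p -> R),
  [/\ forall (v : 'cV[R]_p) (i : 'I_p), 0 <= c v i,
      forall v : 'cV[R]_p, (v^T *m (X *m X^T) *m v) 0 0 = \sum_i dd i * c v i,
      forall v : 'cV[R]_p, \sum_i (v i 0)^+2 = \sum_i c v i,
      forall i, eigenvalue (X *m X^T) (dd i) &
      forall (y : 'cV[R]_q) (i : 'I_p), dd i = 0 -> c (X *m y) i = 0].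
Proof.
set S := X *m X^T.
set SC := map_mx toC S.
have SCT : SC^T = SC by rewrite /SC /S map_trmx trmx_mul trmxK.
have Sherm : SC \is hermsymmx.
  apply/is_hermitianmxP; rewrite expr0 scale1r.
  by rewrite SCT /SC conj_mx_toC.
have /orthomx_spectralP HP := hermitian_normalmx Sherm.
set P := spectralmx SC in HP.
set D := spectral_diag SC in HP.
have Pu : P \is unitarymx by apply: spectral_unitarymx.
have PPt : P *m map_mx conjC P^T = 1%:M by apply/unitarymxP.
have iP : invmx P = map_mx conjC P^T by apply: invmx_unitary.
have Punit : P \in unitmx by apply: spectral_unit.
have PtP : map_mx conjC P^T *m P = 1%:M by rewrite -iP mulVmx.
have Dreal : forall i, D 0 i \is Num.real.
  by move=> i; have /mxOverP := hermitian_spectral_diag_real Sherm; apply.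
pose dd i := complex.Re (D 0 i).
have Hdd : forall i, toC (dd i) = D 0 i by move=> i; apply: RRe_real.
pose w (v : 'cV[R]_p) := P *m map_mx toC v.
pose c (v : 'cV[R]_p) (i : 'I_p) := complex.Re (w v i 0 * (w v i 0)^*).
have Hc : forall v i, toC (c v i) = w v i 0 * (w v i 0)^*.
  by move=> v i; apply: RRe_real; apply: ger0_real; apply: mul_conjC_ge0.
have PSC : P *m SC = diag_mx D *m P by rewrite HP !mulmxA mulmxV // mul1mx.
have rowPe i : row i P *m SC = D 0 i *: row i P.
  by rewrite -row_mul PSC row_mul row_diag_mx -scalemxAl -rowE.
exists dd, c; split.
- move=> v i; by rewrite -ler0c Hc mul_conjC_ge0.
- move=> v; apply: complexI.
  have -> : toC ((v^T *m S *m v) 0 0) = (((map_mx toC v)^T *m SC) *m map_mx toC v) 0 0.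
    by rewrite /SC map_trmx -!map_mxM [RHS]mxE.
  rewrite HP iP quad_diag rmorph_sum; apply: eq_bigr => i _.
  by rewrite rmorphM; congr (_ * _); [exact: esym (Hdd i) | exact: esym (Hc v i)].
- move=> v; apply: complexI.
  have -> : toC (\sum_i (v i 0)^+2) = (((map_mx toC v)^T *m (map_mx conjC P^T *m diag_mx (const_mx 1) *m P)) *m map_mx toC v) 0 0.
    rewrite diag_const_mx mulmx1 PtP mulmx1 mxE rmorph_sum; apply: eq_bigr => j _.
    by rewrite !mxE rmorphXn.
  rewrite quad_diag rmorph_sum; apply: eq_bigr => i _.
  by rewrite mxE mul1r; exact: esym (Hc v i).
- move=> i; rewrite eigenvalue_root_char -(fmorph_root toC) map_char_poly.
  change (root (char_poly SC) (toC (dd i))); rewrite Hdd.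
  rewrite -eigenvalue_root_char; apply/eigenvalueP; exists (row i P); first exact: rowPe.
  apply/eqP => r0; have := congr1 (fun M => row i M) PPt.
  rewrite row_mul r0 mul0mx => /rowP/(_ i); rewrite !mxE eqxx /= => /eqP.
  by rewrite eq_sym oner_eq0.
- move=> y i di0.
  have D0 : D 0 i = 0 by rewrite -Hdd di0 rmorph0.
  set z := row i P *m map_mx toC X.
  have zz : z *m map_mx conjC z^T = 0.
    rewrite /z trmx_mul map_mxM -map_trmx conj_mx_toC mulmxA -(mulmxA _ (map_mx toC X)).
    by rewrite map_trmx -map_mxM -/S -/SC rowPe D0 scale0r mul0mx.
  have z0 : z = 0.
    apply/rowP => j; rewrite mxE.
    have := congr1 (fun M : 'M[C]_1 => M 0 0) zz; rewrite !mxE => /psumr_eq0P H.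
    have H0 : forall k : 'I_q, true -> 0 <= z 0 k * (map_mx conjC z^T) k 0.
      by move=> k _; rewrite !mxE mul_conjC_ge0.
    by have := H H0 j isT; rewrite !mxE => /eqP; rewrite mul_conjC_eq0 => /eqP ->.
  have wi : w (X *m y) i 0 = 0.
    have := congr1 (fun M : 'M[C]_(1,1) => M 0 0) (row_mul i P (map_mx toC (X *m y))).
    rewrite /w mxE => ->; rewrite map_mxM mulmxA -/z z0 mul0mx mxE //.
  by rewrite /c wi mul0r.
Qed.
End T.

End SpecAux.
Import SpecAux.

Section FF.
Local Open Scope classical_set_scope.

Variable R : realType.

Lemma sqnorm_tr p (w : 'cV[R]_p) : (w^T *m w) 0 0 = sqnorm w.
Proof. rewrite mxE /sqnorm; apply: eq_bigr => i _; by rewrite mxE expr2. Qed.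

Lemma sqnorm_ge0 p (w : 'cV[R]_p) : 0 <= sqnorm w.
Proof. by apply: sumr_ge0 => i _; apply: sqr_ge0. Qed.

Lemma sqnorm_eq0 p (w : 'cV[R]_p) : sqnorm w = 0 -> w = 0.
Proof.
move=> /psumr_eq0P H; apply/matrixP => i j; rewrite ord1 mxE.
by apply/eqP; rewrite -sqrf_eq0; apply/eqP; apply: H => // k _; apply: sqr_ge0.
Qed.

Lemma quadX p q (X : 'M[R]_(p,q)) (v : 'cV[R]_p) :
  (v^T *m (X *m X^T) *m v) 0 0 = sqnorm (X^T *m v).
Proof. by rewrite -sqnorm_tr trmx_mul trmxK !mulmxA. Qed.

Lemma eig_vec p q (X : 'M[R]_(p,q)) a : eigenvalue (X *m X^T) a ->
  exists v : 'cV[R]_p, 0 < sqnorm v /\ (X *m X^T) *m v = a *: v.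
Proof.
move=> /eigenvalueP [u Hu u0]; exists u^T; split.
  rewrite lt_neqAle sqnorm_ge0 andbT eq_sym; apply/eqP => /sqnorm_eq0 H.
  by move: u0; rewrite -[u]trmxK H trmx0 eqxx.
have ST : (X *m X^T)^T = X *m X^T by rewrite trmx_mul trmxK.
by rewrite -{1}ST -trmx_mul Hu linearZ.
Qed.

Lemma eig_quad p q (X : 'M[R]_(p,q)) a (v : 'cV[R]_p) :
  (X *m X^T) *m v = a *: v -> (v^T *m (X *m X^T) *m v) 0 0 = a * sqnorm v.
Proof. by move=> Hv; rewrite -mulmxA Hv -scalemxAr mxE sqnorm_tr. Qed.

Lemma rho_bound n (M : 'M[R]_n) (v : 'cV[R]_n) : M^T = M ->
  sqnorm (M *m v) <= rho (M *m M) * sqnorm v.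
Proof.
move=> MT; have [dd [c [c0 Hq Hn Hev He]]] := @spec_data _ _ _ M.
have -> : M *m M = M *m M^T by rewrite MT.
have -> : M *m v = M^T *m v by rewrite MT.
set S := M *m M^T.
have hub : has_ubound [set a | eigenvalue S a].
  exists (\big[Order.max/0]_i dd i) => a /= /[dup] Ha /eig_vec [u [u0 Hu]].
  have := eig_quad Hu; rewrite Hq.
  have : \sum_i dd i * c u i <= \big[Order.max/0]_i dd i * sqnorm u.
    rewrite /sqnorm Hn mulr_sumr; apply: ler_sum => i _.
    by apply: ler_wpM2r => //; apply: le_bigmax.
  by move=> H1 H2; rewrite H2 in H1; rewrite -(ler_pM2r u0).
rewrite -quadX Hq /sqnorm Hn mulr_sumr; apply: ler_sum => i _.
apply: ler_wpM2r => //; exact: (ub_le_sup hub (Hev i)).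
Qed.

Lemma smin_bound p q (X : 'M[R]_(p,q)) (y : 'cV[R]_q) :
  sqnorm (X *m y) <= (smin_nz (X *m X^T))^-1 * sqnorm (X^T *m (X *m y)).
Proof.
have [dd [c [c0 Hq Hn Hev He]]] := @spec_data _ _ _ X.
set S := X *m X^T.
set E := [set a : R | eigenvalue S a /\ a != 0].
have key : forall b (v : 'cV[R]_p), (forall i, dd i = 0 -> c v i = 0) ->
    (forall i, dd i != 0 -> b <= dd i) -> b * \sum_i c v i <= \sum_i dd i * c v i.
  move=> b v Hz Hb; rewrite mulr_sumr; apply: ler_sum => i _.
  have [di0|dn0] := eqVneq (dd i) 0; first by rewrite Hz // mulr0 di0 mul0r.
  by apply: ler_wpM2r; [exact: c0 | exact: Hb].
have eig_ge0 : forall a, eigenvalue S a -> 0 <= a.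
  move=> a /eig_vec [u [u0 Hu]]; have := eig_quad Hu; rewrite quadX => H.
  by have := sqnorm_ge0 (X^T *m u); rewrite H pmulr_lge0.
have hlb : has_lbound E by exists 0 => a [] /eig_ge0.
have hsum := sqnorm_ge0 (X^T *m (X *m y)).
have [E0|/set0P En] := eqVneq E set0.
  rewrite /smin_nz -/S -/E E0 inf0 invr0 mul0r.
  have Hz : forall i, c (X *m y) i = 0.
    move=> i; apply: He; apply/eqP; apply/negP => /negP dn0.
    have : E (dd i) by split => //; exact: Hev.
    by rewrite E0.
  by rewrite /sqnorm Hn big1.
pose m0 := \big[Order.min/1]_(i | dd i != 0) dd i.
have m0pos : 0 < m0.
  rewrite /m0; elim/big_ind: _ => //; first by move=> x1 x2 h1 h2; rewrite lt_min h1 h2.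
  by move=> i dn0; rewrite lt_neqAle eq_sym dn0 eig_ge0 //; exact: Hev.
have m0le : forall i, dd i != 0 -> m0 <= dd i by move=> i dn0; exact: bigmin_le_cond.
have m0lb : lbound E m0.
  move=> a [] /[dup] Ha /eig_vec [u [u0 Hu]] an0.
  have Hz : forall i, dd i = 0 -> c u i = 0.
    move=> i di0; have -> : u = X *m (a^-1 *: (X^T *m u)).
      by rewrite -scalemxAr mulmxA -/S Hu scalerA mulVf // scale1r.
    exact: He.
  have := key m0 u Hz m0le; rewrite -Hq (eig_quad Hu) -Hn -/(sqnorm u).
  by rewrite ler_pM2r.
set s := smin_nz S.
have sm0 : m0 <= s by apply: lb_le_inf.
have spos : 0 < s by apply: lt_le_trans sm0.
have sle : forall i, dd i != 0 -> s <= dd i.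
  move=> i dn0; apply: ge_inf => //; split => //; exact: Hev.
rewrite -quadX Hq /sqnorm Hn.
have H := key s (X *m y) (He y) sle.
rewrite -[X in X <= _](mulKf (lt0r_neq0 spos)); apply: ler_wpM2l => //.
by rewrite invr_ge0 ltW.
Qed.

Lemma lip_sq (g : R -> R) (L : R) :
  (forall x, derivable g x 1) -> (forall x, 0 <= derive1 g x <= L) ->
  forall a b, (g a - g b) ^+ 2 <= L ^+ 2 * (a - b) ^+ 2.
Proof.
move=> dg hb.
have key : forall a b, a <= b -> (g a - g b) ^+ 2 <= L ^+ 2 * (a - b) ^+ 2.
  move=> a b ab.
  have hd : forall x, x \in `]a, b[%R -> is_derive x 1 g (derive1 g x).
    by move=> x _; rewrite derive1E; exact: derivableP (dg x).
  have [c _ Hc] := @MVT_segment R g (derive1 g) a b ab hd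
    (derivable_within_continuous (fun x _ => dg x)).
  have -> : (g a - g b) ^+ 2 = (g b - g a) ^+ 2 by rewrite -sqrrN opprB.
  rewrite Hc exprMn -(sqrrN (a - b)) opprB; apply: ler_wpM2r; first exact: sqr_ge0.
  have /andP [h1 h2] := hb c.
  by rewrite ler_sqr // ?nnegrE // (le_trans h1 h2).
move=> a b; have [ab|ba] := leP a b; first exact: key.
rewrite -sqrrN opprB -(sqrrN (a - b)) opprB; apply: key; exact: ltW.
Qed.

Lemma sq_split (t a b : R) : 1 < t -> (a + b) ^+ 2 <= t * a ^+ 2 + t / (t - 1) * b ^+ 2.
Proof.
move=> t1; have u0 : 0 < t - 1 by rewrite subr_gt0.
have -> : t / (t - 1) = 1 + (t - 1)^-1 by field; rewrite subr_eq0 gt_eqF.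
set u := t - 1 in u0 *; have -> : t = u + 1 by rewrite /u subrK.
set w := b / u; have -> : b = w * u by rewrite /w divfK // gt_eqF.
rewrite -subr_ge0.
have -> : (u + 1) * a ^+ 2 + (1 + u^-1) * (w * u) ^+ 2 - (a + w * u) ^+ 2 = u * (a - w) ^+ 2.
  by field; rewrite gt_eqF.
by apply: mulr_ge0; [exact: ltW | exact: sqr_ge0].
Qed.

Lemma sqnorm_split p t (u v : 'cV[R]_p) : 1 < t ->
  sqnorm (u + v) <= t * sqnorm u + t / (t - 1) * sqnorm v.
Proof.
move=> t1; rewrite /sqnorm !mulr_sumr -big_split /=; apply: ler_sum => i _.
by rewrite mxE; apply: sq_split.
Qed.

Lemma sqnormN p (v : 'cV[R]_p) : sqnorm (- v) = sqnorm v.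
Proof. by apply: eq_bigr => i _; rewrite mxE sqrrN. Qed.

Lemma sqnormZ p a (v : 'cV[R]_p) : sqnorm (a *: v) = a ^+ 2 * sqnorm v.
Proof. rewrite /sqnorm mulr_sumr; apply: eq_bigr => i _; by rewrite mxE exprMn. Qed.

Lemma grad_lip n (f : 'I_n -> R -> R) (L : R) (x y : 'cV[R]_n) :
  (forall i x, derivable (derive1 (f i)) x 1) ->
  (forall i x, 0 <= derive1 (derive1 (f i)) x <= L) ->
  sqnorm (grad f x - grad f y) <= L ^+ 2 * sqnorm (x - y).
Proof.
move=> d2 hb; rewrite /sqnorm mulr_sumr; apply: ler_sum => i _.
rewrite !mxE; exact: lip_sq.
Qed.

Lemma smin_ge0 p q (X : 'M[R]_(p,q)) : 0 <= smin_nz (X *m X^T).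
Proof.
set S := X *m X^T; set E := [set a : R | eigenvalue S a /\ a != 0].
have eig_ge0 : forall a, eigenvalue S a -> 0 <= a.
  move=> a /eig_vec [u [u0 Hu]]; have := eig_quad Hu; rewrite quadX => H.
  by have := sqnorm_ge0 (X^T *m u); rewrite H pmulr_lge0.
have [E0|/set0P En] := eqVneq E set0.
  by rewrite /smin_nz -/S -/E E0 inf0.
by apply: lb_le_inf => // a [] /eig_ge0.
Qed.


End FF.

Theorem lemma3p5 (R : realType) (n eps : nat) (E : 'I_eps -> 'I_n * 'I_n)
  (B : 'M[R]_n) (f : 'I_n -> R -> R) (m L alpha beta : R) (T : nat)
  (x0 xs : 'cV[R]_n) (ls : 'cV[R]_eps) (d e g : R) :
  simple_graph E -> connected_graph E ->
  (* B symmetric PSD, same null space as A, sparsity pattern of the graph *)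
  B^T = B ->
  (forall v : 'cV[R]_n, 0 <= (v^T *m B *m v) 0 0) ->
  (forall v : 'cV[R]_n, B *m v = 0 <-> incidence R E *m v = 0) ->
  (forall i j : 'I_n, i != j -> B i j != 0 -> adj E i j) ->
  (* local functions: twice differentiable, m <= f_i'' <= L *)
  0 < m -> m <= L ->
  (forall i x, derivable (f i) x 1) ->
  (forall i x, derivable (derive1 (f i)) x 1) ->
  (forall i x, m <= derive1 (derive1 (f i)) x <= L) ->
  (* x* is the unique minimizer of f subject to A x = 0 *)
  incidence R E *m xs = 0 ->
  (forall x : 'cV[R]_n, incidence R E *m x = 0 ->
     \sum_i f i (xs i 0) <= \sum_i f i (x i 0)) ->
  (forall x : 'cV[R]_n, incidence R E *m x = 0 ->
     \sum_i f i (x i 0) <= \sum_i f i (xs i 0) -> x = xs) ->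
  (* Lagrange multiplier in the column space of A *)
  grad f xs + (incidence R E)^T *m ls = 0 ->
  B *m xs = 0 ->
  (exists y : 'cV[R]_n, ls = incidence R E *m y) ->
  (* parameters *)
  0 < alpha -> 0 < beta -> (1 <= T)%N ->
  alpha < 1 / rho B ->
  1 < d -> 1 < e -> 1 < g ->
  forall k : nat,
    let A := incidence R E in
    let U := 1%:M - alpha *: B in
    let p := flexpd alpha beta T A B f x0 k in
    let xT1 := inner alpha A B f p.2 p.1 (T - 1) in
    let xT := inner alpha A B f p.2 p.1 T in
    let lam1 := (flexpd alpha beta T A B f x0 k.+1).2 in
    sqnorm (lam1 - ls) <=
      d / (alpha ^+ 2 * smin_nz (A *m A^T))
        * (e / (e - 1) * rho (U *m U) + e * alpha ^+ 2 * L ^+ 2)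
        * sqnorm (xT1 - xT)
    + d / ((d - 1) * alpha ^+ 2 * smin_nz (A *m A^T))
        * (g / (g - 1) * alpha ^+ 2
             * rho ((beta *: (A^T *m A) - B) *m (beta *: (A^T *m A) - B))
           + g * alpha ^+ 2 * L ^+ 2)
        * sqnorm (xT - xs).
Proof.
move=> _ _ BT _ _ _ m0 mL _ d2 hf2 Axs _ _ Hkkt Bxs [y0 Hy0] a0 b0 T1 _ d1 e1 g1 k.
cbv zeta.
set A := incidence R E.
set U := 1%:M - alpha *: B.
set p := flexpd alpha beta T A B f x0 k.
set xT1 := inner alpha A B f p.2 p.1 (T - 1).
set xT := inner alpha A B f p.2 p.1 T.
set lam1 := (flexpd alpha beta T A B f x0 k.+1).2.
have hf2' : forall i x, 0 <= derive1 (derive1 (f i)) x <= L.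
  move=> i x; have /andP [h1 h2] := hf2 i x.
  by rewrite h2 andbT; apply: le_trans h1; apply: ltW.
have hrange : forall j, exists z, (flexpd alpha beta T A B f x0 j).2 = A *m z.
  elim=> [|j [z Hz]]; first by exists 0; rewrite mulmx0.
  exists (z + beta *: inner alpha A B f (flexpd alpha beta T A B f x0 j).2
                        (flexpd alpha beta T A B f x0 j).1 T).
  by rewrite /= Hz mulmxDr scalemxAr.
have [z Hz] := hrange k.
have hxT : xT = U *m xT1 - alpha *: grad f xT1 - alpha *: (A^T *m p.2).
  by rewrite /xT /xT1 /inner -[in LHS](prednK T1) -subn1 iterS.
have hl : lam1 = p.2 + beta *: (A *m xT) by [].
have Hls : A^T *m ls = - grad f xs by apply/eqP; rewrite -addr_eq0 addrC Hkkt.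
set M2 := beta *: (A^T *m A) - B.
have UT : U^T = U by rewrite /U linearB /= trmx1 linearZ /= BT.
have M2T : M2^T = M2 by rewrite /M2 linearB /= linearZ /= trmx_mul trmxK BT.
set g1x := grad f xT1; set gT := grad f xT; set gs := grad f xs.
have ident : alpha *: (A^T *m (lam1 - ls)) =
   ((- (alpha *: (g1x - gT))) + U *m (xT1 - xT)) +
   ((- (alpha *: (gT - gs))) + alpha *: (M2 *m (xT - xs))).
  have E2 : U *m xT = xT - alpha *: (B *m xT).
    by rewrite /U mulmxBl mul1mx -scalemxAl.
  have E3 : M2 *m (xT - xs) = beta *: (A^T *m (A *m xT)) - B *m xT.
    rewrite /M2 mulmxBr !mulmxBl -!scalemxAl -!mulmxA Axs Bxs mulmx0 scaler0.
    by rewrite subrr subr0.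
  rewrite hl mulmxBr mulmxDr Hls -scalemxAr mulmxBr E2 E3.
  set Alk := A^T *m p.2. set AAx := A^T *m (A *m xT). set Bx := B *m xT.
  set Ux1 := U *m xT1.
  rewrite hxT.
  apply/matrixP => i j; rewrite !mxE; ring.
set n1 := sqnorm (xT1 - xT); set n2 := sqnorm (xT - xs).
set s := smin_nz (A *m A^T).
set rU := rho (U *m U); set rM := rho (M2 *m M2).
have hD : lam1 - ls = A *m (z + beta *: xT - y0).
  by rewrite hl Hz Hy0 !mulmxBr mulmxDr scalemxAr.
have H1 : sqnorm (lam1 - ls) <= s^-1 * sqnorm (A^T *m (lam1 - ls)).
  by rewrite hD; apply: smin_bound.
have s0 : 0 <= s^-1 by rewrite invr_ge0; apply: smin_ge0.
have H3 : sqnorm ((- (alpha *: (g1x - gT))) + U *m (xT1 - xT)) <=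
    e * (alpha ^+ 2 * (L ^+ 2 * n1)) + e / (e - 1) * (rU * n1).
  apply: le_trans (sqnorm_split _ _ e1) _.
  apply: lerD; apply: ler_wpM2l.
  - by apply: ltW; apply: lt_trans e1.
  - by rewrite sqnormN sqnormZ; apply: ler_wpM2l; [exact: sqr_ge0 | exact: grad_lip].
  - by apply: divr_ge0; apply: ltW; [apply: lt_trans e1 | rewrite subr_gt0].
  - exact: rho_bound.
have H4 : sqnorm ((- (alpha *: (gT - gs))) + alpha *: (M2 *m (xT - xs))) <=
    g * (alpha ^+ 2 * (L ^+ 2 * n2)) + g / (g - 1) * (alpha ^+ 2 * (rM * n2)).
  apply: le_trans (sqnorm_split _ _ g1) _.
  apply: lerD; apply: ler_wpM2l.
  - by apply: ltW; apply: lt_trans g1.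
  - by rewrite sqnormN sqnormZ; apply: ler_wpM2l; [exact: sqr_ge0 | exact: grad_lip].
  - by apply: divr_ge0; apply: ltW; [apply: lt_trans g1 | rewrite subr_gt0].
  - by rewrite sqnormZ; apply: ler_wpM2l; [exact: sqr_ge0 | exact: rho_bound].
have H2 : alpha ^+ 2 * sqnorm (A^T *m (lam1 - ls)) <=
    d * (e * (alpha ^+ 2 * (L ^+ 2 * n1)) + e / (e - 1) * (rU * n1)) +
    d / (d - 1) * (g * (alpha ^+ 2 * (L ^+ 2 * n2)) + g / (g - 1) * (alpha ^+ 2 * (rM * n2))).
  rewrite -sqnormZ ident; apply: le_trans (sqnorm_split _ _ d1) _.
  apply: lerD; apply: ler_wpM2l => //.
  - by apply: ltW; apply: lt_trans d1.
  - by apply: divr_ge0; apply: ltW; [apply: lt_trans d1 | rewrite subr_gt0].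
apply: le_trans H1 _.
have a2 : 0 < alpha ^+ 2 by apply: exprn_gt0.
apply: (@le_trans _ _ (s^-1 * ((alpha ^+ 2)^-1 *
    (d * (e * (alpha ^+ 2 * (L ^+ 2 * n1)) + e / (e - 1) * (rU * n1)) +
    d / (d - 1) * (g * (alpha ^+ 2 * (L ^+ 2 * n2)) + g / (g - 1) * (alpha ^+ 2 * (rM * n2))))))).
  apply: ler_wpM2l => //.
  rewrite -[X in X <= _](mulKf (lt0r_neq0 a2)); apply: ler_wpM2l => //.
  by rewrite invr_ge0 ltW.
rewrite le_eqVlt; apply/orP; left; apply/eqP.
rewrite !invfM; ring.
Qed.
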